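(* Let $P(k)=C_pT_p^k-C_mT_m^k$ with $C_p,C_m>0$, $T_p,T_m\in(0,1)$, $T_p\neq T_m$. For each integer $j\ge 0$ the $j$-th derivative $P^{(j)}$ has a unique zero $k^{(j)}$ (the $j$-th characteristic point), and $k^{(0)}<k^{(1)}<k^{(2)}<\dots$, i.e. the abscissa intersection point, the extremum, the inflection point and then the zeros of higher derivatives are located from left to right in this order. *)

(* Defs.v *)
From Stdlib Require Import Reals.
From Coquelicot Require Import Coquelicot.
Open Scope R_scope.

Definition Pfun (Cp Cm Tp Tm : R) (k : R) : R :=
  Cp * Rpower Tp k - Cm * Rpower Tm k.

(* Main.v *)
Require Import Defs.
From Stdlib Require Import Reals Lra.
From Coquelicot Require Import Coquelicot.
Open Scope R_scope.

Lemma Pfun_Dn (Cp Cm Tp Tm : R) (hTp : 0 < Tp) (hTm : 0 < Tm) (j : nat) (k : R) :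
  Derive_n (Pfun Cp Cm Tp Tm) j k =
  Cp * (ln Tp)^j * exp (ln Tp * k) - Cm * (ln Tm)^j * exp (ln Tm * k).
Proof.
  revert k; induction j as [|j IH]; intro k.
  - simpl. unfold Pfun, Rpower. rewrite (Rmult_comm k (ln Tp)), (Rmult_comm k (ln Tm)). ring.
  - simpl. rewrite (Derive_ext _ (fun k => Cp * (ln Tp)^j * exp (ln Tp * k) - Cm * (ln Tm)^j * exp (ln Tm * k))) by exact IH.
    apply is_derive_unique. auto_derive; [easy|]. ring.
Qed.

Theorem corollary3 (Cp Cm Tp Tm : R)
  (hCp : 0 < Cp) (hCm : 0 < Cm)
  (hTp : 0 < Tp < 1) (hTm : 0 < Tm < 1) (hneq : Tp <> Tm) :
  exists kpt : nat -> R,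
    (forall (j : nat) (k : R),
        Derive_n (Pfun Cp Cm Tp Tm) j k = 0 <-> k = kpt j) /\
    (forall j : nat, kpt j < kpt (S j)).
Proof.
  set (a := ln Tp). set (b := ln Tm).
  assert (ha : a < 0) by (unfold a; rewrite <- ln_1; apply ln_increasing; lra).
  assert (hb : b < 0) by (unfold b; rewrite <- ln_1; apply ln_increasing; lra).
  assert (hab : a <> b).
  { intro E. apply hneq. apply ln_inv; [lra|lra|exact E]. }
  set (A := - a). set (B := - b).
  assert (hA : 0 < A) by (unfold A; lra).
  assert (hB : 0 < B) by (unfold B; lra).
  exists (fun j => (ln Cp - ln Cm + INR j * (ln A - ln B)) / (b - a)).
  split.
  - intros j k. rewrite Pfun_Dn by lra. fold a b.
    assert (Ea : a = - A) by (unfold A; ring).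
    assert (Eb : b = - B) by (unfold B; ring).
    assert (Pa : a ^ j = (-1)^j * A^j) by (rewrite Ea, <- Rpow_mult_distr; f_equal; ring).
    assert (Pb : b ^ j = (-1)^j * B^j) by (rewrite Eb, <- Rpow_mult_distr; f_equal; ring).
    assert (hs : (-1)^j <> 0) by (apply pow_nonzero; lra).
    assert (hAj : 0 < A^j) by (apply pow_lt; lra).
    assert (hBj : 0 < B^j) by (apply pow_lt; lra).
    assert (hX : 0 < Cp * A^j * exp (a*k)) by (apply Rmult_lt_0_compat; [apply Rmult_lt_0_compat; lra| apply exp_pos]).
    assert (hY : 0 < Cm * B^j * exp (b*k)) by (apply Rmult_lt_0_compat; [apply Rmult_lt_0_compat; lra| apply exp_pos]).
    assert (LX : ln (Cp * A^j * exp (a*k)) = ln Cp + INR j * ln A + a * k).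
    { rewrite ln_mult, ln_mult, ln_exp, ln_pow; try lra; try apply exp_pos. apply Rmult_lt_0_compat; lra. }
    assert (LY : ln (Cm * B^j * exp (b*k)) = ln Cm + INR j * ln B + b * k).
    { rewrite ln_mult, ln_mult, ln_exp, ln_pow; try lra; try apply exp_pos. apply Rmult_lt_0_compat; lra. }
    assert (hba : b - a <> 0) by lra.
    rewrite Pa, Pb. split.
    + intro H.
      assert (E : Cp * A^j * exp (a*k) = Cm * B^j * exp (b*k)).
      { apply (Rmult_eq_reg_l ((-1)^j)); [|exact hs]. lra. }
      apply (f_equal ln) in E. rewrite LX, LY in E.
      apply (Rmult_eq_reg_r (b - a)); [|exact hba]. field_simplify; [|exact hba]. lra.
    + intro Hk.
      assert (E : Cp * A^j * exp (a*k) = Cm * B^j * exp (b*k)).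
      { apply ln_inv; [exact hX|exact hY|]. rewrite LX, LY, Hk. field. exact hba. }
      replace (Cp * ((-1) ^ j * A ^ j) * exp (a * k) - Cm * ((-1) ^ j * B ^ j) * exp (b * k))
        with ((-1)^j * (Cp * A^j * exp (a*k) - Cm * B^j * exp (b*k))) by ring.
      rewrite E. ring.
  - intro j. rewrite S_INR.
    apply Rminus_gt_0_lt.
    replace ((ln Cp - ln Cm + (INR j + 1) * (ln A - ln B)) / (b - a) -
             (ln Cp - ln Cm + INR j * (ln A - ln B)) / (b - a))
      with ((ln A - ln B) / (b - a)) by (field; lra).
    destruct (Rlt_or_le a b) as [Hlt|Hle].
    + apply Rdiv_lt_0_compat; [|lra].
      assert (ln B < ln A) by (apply ln_increasing; unfold A, B; lra). lra.
    + assert (Hlt : b < a) by lra.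
      replace ((ln A - ln B) / (b - a)) with ((ln B - ln A) / (a - b)) by (field; lra).
      apply Rdiv_lt_0_compat; [|lra].
      assert (ln A < ln B) by (apply ln_increasing; unfold A, B; lra). lra.
Qed.
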